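(* Let $X,Y$ be complex Banach spaces, let $\emptyset\ne I\subseteq\mathbb R^n$ be closed with $I+I\subseteq I$, let $\mathcal B$ be any family of compact subsets of $X$ such that every $x\in X$ belongs to some $B\in\mathcal B$, and let $F:I\times X\to Y$ be uniformly continuous and $I$-asymptotically Bohr $\mathcal B$-almost periodic of type $1$. Suppose that: (a) for every $l>0$ and $M>0$ there exist $\mathbf t_0\in I$ and $k>0$ such that for every $\mathbf t\in I_{M+l}$ there exists $\mathbf t_0'\in I$ such that for every $\mathbf t_0''\in B(\mathbf t_0',l)\cap I$ we have $\mathbf t-\mathbf t_0''\in B(\mathbf t_0,kl)\cap I_M$; (b) there exists $L>0$ such that $I_{kL}\setminus I_{(k+1)L}\ne\emptyset$ for all $k\in\mathbb N$; (c) $I_M+I\subseteq I_M$ for all $M>0$. Then $F$ is $(\mathrm R,\mathcal B)$-multi-almost periodic, where $\mathrm R$ is the collection of all sequences in $I$. Furthermore, if $X=\{0\}$ and $\mathcal B=\{X\}$, then $F$ (viewed as a function $I\to Y$) is $I$-asymptotically Bohr almost periodic.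
   Context: $B(\mathbf t_0,l)$ is the closed Euclidean ball; $I_M:=\{\lambda\in I:|\lambda|\ge M\}$. $F$ is $I$-asymptotically Bohr $\mathcal B$-almost periodic of type 1 if for every $B\in\mathcal B$ and $\epsilon>0$ there exist $l>0$ and $M>0$ such that for each $\mathbf t_0\in I$ there exists $\tau\in B(\mathbf t_0,l)\cap I$ with $\|F(\mathbf t+\tau;x)-F(\mathbf t;x)\|_Y\le\epsilon$ whenever $\mathbf t,\mathbf t+\tau\in I_M$ and $x\in B$. $F$ is $(\mathrm R,\mathcal B)$-multi-almost periodic if for every $B\in\mathcal B$ and every sequence $(\mathbf b_k)\in\mathrm R$ there exist a subsequence $(\mathbf b_{k_l})$ and $F^\ast:I\times X\to Y$ with $F(\mathbf t+\mathbf b_{k_l};x)\to F^\ast(\mathbf t;x)$ uniformly for $x\in B$, $\mathbf t\in I$. A function $F:I\to Y$ is $I$-asymptotically Bohr almost periodic if $F=G+Q$ where $G:I\to Y$ is Bohr almost periodic (continuous, and for every $\epsilon>0$ there is $l>0$ such that for each $\mathbf t_0\in I$ there is $\tau\in B(\mathbf t_0,l)\cap I$ with $\|G(\mathbf t+\tau)-G(\mathbf t)\|_Y\le\epsilon$ for all $\mathbf t\in I$) and $Q:I\to Y$ is continuous with $\lim_{\mathbf t\in I,|\mathbf t|\to\infty}Q(\mathbf t)=0$. *)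

(* Defs.v *)
From mathcomp Require Import all_boot all_order all_algebra.
From mathcomp Require Import all_classical all_reals all_analysis.
From mathcomp Require Import complex.
Import Order.TTheory GRing.Theory Num.Theory.
Import numFieldNormedType.Exports.
Local Open Scope classical_set_scope.
Local Open Scope ring_scope.

(* Points of R^n are row vectors
   'rV[R]_n; complex Banach spaces are completeNormedModType R[i]
   (norms take values in R[i]; real bounds e are compared through (e%:C)%C). *)

Definition enorm {R : realType} {n : nat} (t : 'rV[R]_n) : R :=
  Num.sqrt (\sum_(i < n) t ord0 i ^+ 2).

Definition I_ge {R : realType} {n : nat} (I : set 'rV[R]_n) (M : R) : set 'rV[R]_n :=
  [set t | I t /\ M <= enorm t].

Definition cball {R : realType} {n : nat} (t0 : 'rV[R]_n) (l : R) : set 'rV[R]_n :=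
  [set t | enorm (t - t0) <= l].

Definition unif_cont_IX {R : realType} {n : nat}
  {X Y : normedModType R[i]} (I : set 'rV[R]_n) (F : 'rV[R]_n -> X -> Y) : Prop :=
  forall e : R, 0 < e -> exists2 d : R, 0 < d &
    forall t t' x x', I t -> I t' -> enorm (t - t') < d -> `|x - x'| < (d%:C)%C ->
      `|F t x - F t' x'| < (e%:C)%C.

Definition asympt_bohr_B_ap_type1 {R : realType} {n : nat}
  {X Y : normedModType R[i]} (I : set 'rV[R]_n) (BB : set (set X))
  (F : 'rV[R]_n -> X -> Y) : Prop :=
  forall B, BB B -> forall e : R, 0 < e ->
  exists l : R, exists M : R, 0 < l /\ 0 < M /\
    forall t0, I t0 -> exists tau, (cball t0 l `&` I) tau /\
      forall t x, I_ge I M t -> I_ge I M (t + tau) -> B x ->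
        `|F (t + tau) x - F t x| <= (e%:C)%C.

Definition R_B_multi_ap {R : realType} {n : nat}
  {X Y : normedModType R[i]} (I : set 'rV[R]_n) (BB : set (set X))
  (F : 'rV[R]_n -> X -> Y) : Prop :=
  forall B, BB B -> forall b : nat -> 'rV[R]_n, (forall k, I (b k)) ->
  exists phi : nat -> nat, (forall k, (phi k < phi k.+1)%N) /\
  exists Fs : 'rV[R]_n -> X -> Y,
    forall e : R, 0 < e -> exists N : nat, forall m, (N <= m)%N ->
      forall t x, I t -> B x -> `|F (t + b (phi m)) x - Fs t x| <= (e%:C)%C.

Definition bohr_ap {R : realType} {n : nat} {Y : normedModType R[i]}
  (I : set 'rV[R]_n) (G : 'rV[R]_n -> Y) : Prop :=
  {within I, continuous G} /\
  forall e : R, 0 < e -> exists2 l : R, 0 < l &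
    forall t0, I t0 -> exists tau, (cball t0 l `&` I) tau /\
      forall t, I t -> `|G (t + tau) - G t| <= (e%:C)%C.

Definition asympt_bohr_ap {R : realType} {n : nat} {Y : normedModType R[i]}
  (I : set 'rV[R]_n) (f : 'rV[R]_n -> Y) : Prop :=
  exists G Q : 'rV[R]_n -> Y,
    bohr_ap I G /\ {within I, continuous Q} /\
    (forall e : R, 0 < e -> exists M : R, forall t, I t -> M <= enorm t ->
        `|Q t| <= (e%:C)%C) /\
    (forall t, I t -> f t = G t + Q t).

(* Main.v *)
Require Import Defs.
From mathcomp Require Import all_boot all_order all_algebra.
From mathcomp Require Import all_classical all_reals all_analysis.
From mathcomp Require Import complex.
From mathcomp Require Import zify lra.
Import Order.TTheory GRing.Theory Num.Theory.
Import numFieldNormedType.Exports.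
Local Open Scope classical_set_scope.
Local Open Scope ring_scope.

Local Open Scope complex_scope.
Set Implicit Arguments.
Unset Strict Implicit.

Section NY.
Variables (R : realType) (Y : normedModType R[i]).

Definition nY (y : Y) : R := complex.Re `|y|.

Lemma normY_C (y : Y) : `|y| = (nY y)%:C.
Proof.
rewrite /nY [LHS]complexE ger0_Im ?normr_ge0 //.
by rewrite mulr0 addr0.
Qed.

Lemma nY_le (y : Y) (e : R) : (`|y| <= e%:C) = (nY y <= e).
Proof. by rewrite normY_C lecR. Qed.

Lemma nY_lt (y : Y) (e : R) : (`|y| < e%:C) = (nY y < e).
Proof. by rewrite normY_C ltcR. Qed.

Lemma nY_ge0 (y : Y) : 0 <= nY y.
Proof. by have := normr_ge0 y; rewrite lecE => /andP[_]. Qed.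

Lemma nYD (a b : Y) : nY (a + b) <= nY a + nY b.
Proof. by rewrite -lecR rmorphD /= -!normY_C ler_normD. Qed.

Lemma nYN (a : Y) : nY (- a) = nY a.
Proof. by rewrite /nY normrN. Qed.

Lemma nYB (a b : Y) : nY (a - b) = nY (b - a).
Proof. by rewrite /nY distrC. Qed.

Lemma nY0 : nY 0 = 0.
Proof. by rewrite /nY normr0. Qed.

Lemma posC (eps : R[i]) : 0 < eps -> exists2 e : R, 0 < e & eps = e%:C.
Proof.
move=> h; have := h; rewrite ltcE => /andP[/eqP hi hr].
exists (complex.Re eps) => //.
by rewrite [LHS]complexE hi /= mulr0 addr0.
Qed.

Lemma nY_tri3 (a b c d : Y) : nY (a - d) <= nY (a - b) + nY (b - c) + nY (c - d).
Proof.
have -> : a - d = (a - b) + (b - c) + (c - d) by rewrite !addrA !subrK.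
by apply: le_trans (nYD _ _) _; rewrite lerD2r nYD.
Qed.

Lemma tri3_le (a b c d : Y) (e1 e2 e3 : R) : nY (a - b) <= e1 ->
  nY (b - c) <= e2 -> nY (c - d) <= e3 -> nY (a - d) <= e1 + e2 + e3.
Proof.
move=> h1 h2 h3; apply: le_trans (nY_tri3 a b c d) _.
by rewrite !lerD.
Qed.

End NY.

Section ENorm.
Variables (R : realType) (n : nat).
Implicit Types (t u : 'rV[R]_n).

Lemma sum_sq_ge0 t : 0 <= \sum_(i < n) t ord0 i ^+ 2.
Proof. by apply: sumr_ge0 => i _; rewrite sqr_ge0. Qed.

Lemma coord_le_enorm t i : `|t ord0 i| <= enorm t.
Proof.
rewrite /enorm -sqrtr_sqr ler_sqrt ?sum_sq_ge0 //.
rewrite (bigD1 i) //= lerDl.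
by apply: sumr_ge0 => j _; rewrite sqr_ge0.
Qed.

Lemma enorm_ge0 t : 0 <= enorm t.
Proof. by rewrite /enorm sqrtr_ge0. Qed.

Lemma enorm_small (d : R) u : 0 < d ->
  (forall i, `|u ord0 i| < d / n.+1%:R) -> enorm u < d.
Proof.
move=> d0 hu; set r := d / n.+1%:R.
have r0 : 0 < r by rewrite divr_gt0.
have h1 : \sum_(i < n) u ord0 i ^+ 2 <= n%:R * r ^+ 2.
  apply: le_trans (_ : \sum_(i < n) r ^+ 2 <= _).
    apply: ler_sum => i _; rewrite -real_normK ?num_real // !expr2.
    by apply: ler_pM => //; apply/ltW.
  by rewrite sumr_const card_ord mulr_natl.
have h2 : n%:R * r ^+ 2 < d ^+ 2.
  rewrite /r expr_div_n mulrA ltr_pdivrMr ?exprn_gt0 ?ltr0n //.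
  rewrite mulrC ltr_pM2l ?exprn_gt0 //.
  by rewrite -natrX ltr_nat expnS; lia.
rewrite /enorm -(ger0_norm (ltW d0)) -sqrtr_sqr ltr_sqrt ?exprn_gt0 //.
exact: le_lt_trans h1 h2.
Qed.

Lemma enorm_big (d : R) u : 0 < d -> d <= enorm u ->
  exists i, d / n.+1%:R <= `|u ord0 i|.
Proof.
move=> d0 hd; apply/not_existsP => hn.
suff : enorm u < d by rewrite ltNge hd.
apply: enorm_small => // i; rewrite ltNge; apply/negP => h; exact: (hn i).
Qed.

End ENorm.

Lemma ball_coord (R : realType) n (p y : 'rV[R]_n) (r : R) :
  ball p r y -> forall i, `|p ord0 i - y ord0 i| < r.
Proof.
rewrite -ball_normE /ball_ /= => h i.
move: h; rewrite /Num.Def.normr /= mx_normrE => /bigmax_ltP [_ h].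
by have := h (ord0, i) isT; rewrite !mxE.
Qed.

Definition sinc (f : nat -> nat) := forall k, (f k < f k.+1)%N.

Lemma sinc_lt f : sinc f -> forall i j, (i < j)%N -> (f i < f j)%N.
Proof.
move=> hf i j; elim: j => // j IH; rewrite ltnS leq_eqVlt => /orP[/eqP -> //|].
by move/IH => h; apply: ltn_trans h (hf j).
Qed.

Lemma sinc_ge f : sinc f -> forall i, (i <= f i)%N.
Proof.
move=> hf; elim=> // i IH; exact: leq_ltn_trans IH (hf i).
Qed.

Lemma sinc_comp f g : sinc f -> sinc g -> sinc (f \o g).
Proof. by move=> hf hg k; rewrite /=; apply: (sinc_lt hf); apply: hg. Qed.

Lemma extract (P : nat -> Prop) : (forall N, exists k, (N <= k)%N /\ P k) ->
  exists th, sinc th /\ forall i, P (th i).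
Proof.
move=> h.
have g : forall N, {k | (N <= k)%N /\ P k}.
  by move=> N; apply: cid; apply: h.
pose th := fix th i := match i with 0 => sval (g 0%N) | i'.+1 => sval (g (th i').+1) end.
exists th; split.
  by move=> k /=; case: (g (th k).+1) => x [].
by case=> [|i] /=; [case: (g 0%N) => x [] | case: (g (th i).+1) => x []].
Qed.

Lemma box_subseq (R : realType) n (s : nat -> 'rV[R]_n) (K d : R) :
  (forall k i, `|s k ord0 i| <= K) -> 0 < d ->
  exists th, sinc th /\ forall i j, enorm (s (th i) - s (th j)) < d.
Proof.
move=> hK d0.
pose box := [set v : 'rV[R]_n | forall i, (fun _ => `[(- K), K]%classic) i (v ord0 i)].
have cbox : compact box.
  by apply: rV_compact => _; apply: segment_compact.
have Fbox : (s @ \oo) box.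
  exists 0%N => // k _ i /=; rewrite in_itv /= -ler_norml; exact: hK.
have [p [_ clp]] := cbox _ _ Fbox.
set r := d / n.+1%:R / 2.
have r0 : 0 < r by rewrite !divr_gt0.
have : forall N, exists k, (N <= k)%N /\ ball p r (s k).
  move=> N.
  have FA : (s @ \oo) [set y | exists2 k, (N <= k)%N & y = s k].
    by exists N => // k /= hk; exists k.
  have [y [[k hk ->] hb]] := clp _ _ FA (nbhsx_ballx p r r0).
  by exists k.
move=> /extract [th [sth hth]]; exists th; split => // i j.
apply: enorm_small => // c; rewrite !mxE.
have h1 := ball_coord (hth i) c; have h2 := ball_coord (hth j) c.
rewrite (_ : s (th i) ord0 c - s (th j) ord0 c =
   - (p ord0 c - s (th i) ord0 c) + (p ord0 c - s (th j) ord0 c)); last first.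
  by rewrite opprB addrA subrK.
apply: le_lt_trans (ler_normD _ _) _; rewrite normrN.
by rewrite [X in _ < X](splitr (d / n.+1%:R)) ltrD.
Qed.

Lemma lt0C (R : realType) (d : R) : 0 < d -> 0 < d%:C.
Proof. by rewrite ltcR. Qed.

Lemma addBB (R : realType) n (t a b : 'rV[R]_n) : (t + a) - (t + b) = a - b.
Proof. by rewrite opprD addrACA subrr add0r. Qed.

Lemma inv_mono (R : realType) (N M : nat) : (N <= M)%N ->
  1 / M.+1%:R <= 1 / N.+1%:R :> R.
Proof.
move=> h; rewrite !div1r lef_pV2 ?posrE ?ltr0n // ler_nat; lia.
Qed.

Lemma small_inv (R : realType) (e : R) : 0 < e -> exists N : nat, 1 / N.+1%:R < e.
Proof.
move=> e0; have := @archi_boundP R (1 / e); rewrite divr_ge0 ?ler01 ?ltW //.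
move=> /(_ isT); set N := Num.Def.archi_bound _ => h; exists N.
rewrite div1r -(invrK e) ltf_pV2 ?posrE ?ltr0n ?invr_gt0 //.
rewrite -div1r; apply: lt_trans h _; rewrite ltr_nat; lia.
Qed.

Lemma unif_lim (R : realType) (T X : Type) (Y : completeNormedModType R[i])
  (D : T -> X -> Prop) (u : nat -> T -> X -> Y) :
  (forall N m m', (N <= m)%N -> (N <= m')%N -> forall t x, D t x ->
     nY (u m t x - u m' t x) <= 1 / N.+1%:R) ->
  exists Fs : T -> X -> Y, forall N m, (N <= m)%N -> forall t x, D t x ->
     nY (u m t x - Fs t x) <= 1 / N.+1%:R.
Proof.
move=> hu; exists (fun t x => lim ((fun m => u m t x) @ \oo)).
move=> N m hm t x Dtx.
set v := fun m => u m t x.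
have cv : cvg (v @ \oo).
  apply/cauchy_cvgP/cauchy_exP => eps eps0.
  have [e e0 ->] := posC eps0.
  have [N' hN'] := small_inv e0.
  exists (v N'); exists N' => // k /= hk.
  rewrite -ball_normE /ball_ /= nY_lt.
  by apply: le_lt_trans hN'; apply: hu.
apply/ler_addgt0Pr => d d0.
have [N'' _ hN''] := (cvgrPdist_le _ _).1 cv (d%:C) (lt0C d0).
have := hN'' (maxn N N'') (leq_maxr _ _); rewrite distrC nY_le => h2.
have h1 := hu N m (maxn N N'') hm (leq_maxl _ _) t x Dtx.
set L := lim _; set k := maxn N N''.
rewrite (_ : u m t x - L = (u m t x - v k) + (v k - L)); last by rewrite addrA subrK.
apply: le_trans (nYD _ _) _; exact: lerD.
Qed.

Section Main.
Variables (R : realType) (n : nat) (X : normedModType R[i]) (Y : completeNormedModType R[i]).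
Variables (I : set 'rV[R]_n) (BB : set (set X)) (F : 'rV[R]_n -> X -> Y).
Hypothesis Iadd : forall s t, I s -> I t -> I (s + t).
Hypothesis Fuc : unif_cont_IX I F.
Hypothesis Fap : asympt_bohr_B_ap_type1 I BB F.
Hypothesis Ha : forall l M : R, 0 < l -> 0 < M ->
     exists t0, I t0 /\ exists k : R, 0 < k /\
       forall t, I_ge I (M + l) t -> exists t0', I t0' /\
         forall t0'', (cball t0' l `&` I) t0'' ->
           (cball t0 (k * l) `&` I_ge I M) (t - t0'').
Hypothesis Hc : forall M : R, 0 < M -> forall s t, I_ge I M s -> I t -> I_ge I M (s + t).

Lemma key B (hB : BB B) (e : R) (e0 : 0 < e) (b : nat -> 'rV[R]_n)
  (hb : forall k, I (b k)) :
  exists th, sinc th /\ forall i j t x, I t -> B x ->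
    nY (F (t + b (th i)) x - F (t + b (th j)) x) <= e.
Proof.
set e' := e / 3.
have e'0 : 0 < e' by rewrite divr_gt0.
have [l [M [l0 [M0 hap]]]] := Fap hB e'0.
have [d d0 hd] := Fuc e'0.
have [t0 [It0 [k [k0 ha]]]] := Ha l0 M0.
set K := enorm t0 + k * l + (M + l).
have hs : forall m, exists s, I s /\ (forall i, `|s ord0 i| <= K) /\
    forall t x, I t -> B x -> nY (F (t + b m) x - F (t + s) x) <= e'.
  move=> m; have [hbig|hsmall] := boolP (M + l <= enorm (b m)).
    have [t0' [It0' h']] := ha (b m) (conj (hb m) hbig).
    have [tau [[htau Itau] hper]] := hap t0' It0'.
    have [hc1 [Is hMs]] := h' tau (conj htau Itau).
    exists (b m - tau); split=> //; split.
      move=> i; have := coord_le_enorm (b m - tau - t0) i.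
      have := coord_le_enorm t0 i; have := enorm_ge0 t0; rewrite !mxE.
      have := ler_normD (b m ord0 i - tau ord0 i - t0 ord0 i) (t0 ord0 i).
      rewrite subrK => h1 h2 h3 h4.
      rewrite /cball /= in hc1.
      have := mulr_gt0 k0 l0; rewrite /K; lra.
    move=> t x It Bx.
    have hM1 : I_ge I M (t + (b m - tau)).
      by rewrite addrC; apply: Hc M0 _ _ (conj Is hMs) It.
    have hM2 : I_ge I M (t + (b m - tau) + tau) by apply: Hc M0 _ _ hM1 Itau.
    have := hper _ x hM1 hM2 Bx; rewrite nY_le.
    by rewrite (_ : t + (b m - tau) + tau = t + b m) // addrA subrK.
  exists (b m); split => //; split.
    move=> i; apply: le_trans (coord_le_enorm _ i) _.
    rewrite -ltNge in hsmall; have := enorm_ge0 t0; have := mulr_gt0 k0 l0.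
    rewrite /K; lra.
  by move=> t x _ _; rewrite subrr nY0 ltW.
have [sf hsf] := choice hs.
have [th [sth hth]] := box_subseq (fun k i => (hsf k).2.1 i) d0.
exists th; split=> // i j t x It Bx.
apply: le_trans (nY_tri3 _ (F (t + sf (th i)) x) (F (t + sf (th j)) x) _) _.
have h1 := (hsf (th i)).2.2 t x It Bx.
have h3 := (hsf (th j)).2.2 t x It Bx; rewrite nYB in h3.
have h2 : nY (F (t + sf (th i)) x - F (t + sf (th j)) x) <= e'.
  rewrite -nY_le; apply: ltW; apply: hd.
  - by apply: Iadd => //; exact: (hsf _).1.
  - by apply: Iadd => //; exact: (hsf _).1.
  - by rewrite addBB.
  - by rewrite subrr normr0 lt0C.
rewrite /e' in h1 h2 h3; lra.
Qed.

Lemma diag B (hB : BB B) (b : nat -> 'rV[R]_n) (hb : forall k, I (b k)) :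
  exists phi, sinc phi /\ forall N m m', (N <= m)%N -> (N <= m')%N ->
    forall t x, I t -> B x ->
    nY (F (t + b (phi m)) x - F (t + b (phi m')) x) <= 1 / N.+1%:R.
Proof.
have step : forall (c : nat -> nat) (j : nat), {th | sinc th /\
    forall i i' t x, I t -> B x ->
    nY (F (t + b (c (th i))) x - F (t + b (c (th i'))) x) <= 1 / j.+1%:R}.
  move=> c j; apply: cid.
  have hj : 0 < 1 / j.+1%:R :> R by rewrite divr_gt0 ?ltr0n.
  exact: (key hB hj (b := b \o c) (fun k => hb (c k))).
pose Psi := fix Psi j := match j with
  | 0 => sval (step id 0%N)
  | j'.+1 => Psi j' \o sval (step (Psi j') j'.+1) end.
have P1 : forall j, sinc (Psi j).
  elim=> [|j IH] /=; first exact: (svalP (step id 0%N)).1.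
  exact: sinc_comp IH (svalP (step (Psi j) j.+1)).1.
have P2 : forall j a a' t x, I t -> B x ->
    nY (F (t + b (Psi j a)) x - F (t + b (Psi j a')) x) <= 1 / j.+1%:R.
  case=> [|j] a a' t x It Bx /=.
    exact: (svalP (step id 0%N)).2.
  exact: (svalP (step (Psi j) j.+1)).2.
have P3 : forall j m, (j <= m)%N -> forall a, exists a', Psi m a = Psi j a'.
  move=> j; elim=> [|m IH].
    by rewrite leqn0 => /eqP -> a; exists a.
  rewrite leq_eqVlt => /orP[/eqP -> a|]; first by exists a.
  rewrite ltnS => /IH h a /=; exact: h.
exists (fun m => Psi m m); split.
  move=> m /=; apply: (sinc_lt (P1 m)).
  have := sinc_ge (svalP (step (Psi m) m.+1)).1 m.+1; exact: leq_trans.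
move=> N m m' hm hm' t x It Bx.
have [a ->] := P3 _ _ hm m; have [a' ->] := P3 _ _ hm' m'.
exact: P2.
Qed.

Lemma part1u B (hB : BB B) (b : nat -> 'rV[R]_n) (hb : forall k, I (b k)) :
  exists phi, sinc phi /\ exists Fs : 'rV[R]_n -> X -> Y,
    forall N m, (N <= m)%N -> forall t x, I t -> B x ->
    nY (F (t + b (phi m)) x - Fs t x) <= 1 / N.+1%:R.
Proof.
have [phi [sphi hphi]] := diag hB hb.
exists phi; split => //.
have [Fs hFs] := unif_lim (D := fun t x => I t /\ B x)
  (u := fun m t x => F (t + b (phi m)) x)
  (fun N m m' hm hm' t x '(conj It Bx) => hphi N m m' hm hm' t x It Bx).
exists Fs => N m hm t x It Bx; exact: hFs.
Qed.

Lemma part1 : R_B_multi_ap I BB F.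
Proof.
move=> B hB b hb.
have [phi [sphi [Fs hFs]]] := part1u hB hb.
exists phi; split => //; exists Fs => e e0.
have [N hN] := small_inv e0.
exists N => m hm t x It Bx; rewrite nY_le.
apply: le_trans (ltW hN); exact: hFs.
Qed.

Lemma cont_of_unif (g : 'rV[R]_n -> Y) :
  (forall e, 0 < e -> exists2 d, 0 < d & forall t t', I t -> I t' ->
     enorm (t - t') < d -> nY (g t - g t') <= e) -> {within I, continuous g}.
Proof.
move=> hg; apply/subspace_continuousP => x Ix.
apply/cvgrPdist_le => eps eps0; have [e e0 ->] := posC eps0.
have [d d0 hd] := hg e e0.
have r0 : 0 < d / n.+1%:R by rewrite divr_gt0.
rewrite /within /=; apply: filterS (nbhsx_ballx x _ r0) => y hy Iy.
rewrite nY_le; apply: hd => //; apply: enorm_small => // i.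
rewrite !mxE; move: hy; rewrite /ball /= /mx_ball => -[_ /(_ ord0 i)]; rewrite -ball_normE /ball_ /=; exact.
Qed.

Lemma addBB' (a b t : 'rV[R]_n) : (a + t) - (b + t) = a - b.
Proof. by rewrite opprD addrACA subrr addr0. Qed.

Lemma subBB (a b c d : Y) : (a - b) - (c - d) = (a - c) - (b - d).
Proof. by rewrite !opprB addrACA [RHS]addrACA [- c + _]addrC. Qed.

Lemma large_pt (Hb : exists2 L : R, 0 < L & forall k : nat, (0 < k)%N ->
     (I_ge I (k%:R * L) `\` I_ge I (k.+1%:R * L)) !=set0) (Z : R) :
  exists t, I t /\ Z <= enorm t.
Proof.
have [L L0 hL] := Hb.
have := @archi_boundP R (`|Z| / L); rewrite divr_ge0 ?normr_ge0 ?ltW //.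
move=> /(_ isT); set kk := Num.Def.archi_bound _ => hk.
have [t [[It ht] _]] := hL kk.+1 isT.
exists t; split => //; apply: le_trans ht.
apply: le_trans (ler_norm Z) _.
rewrite -ler_pdivrMr // ; apply: le_trans (ltW hk) _; rewrite ler_nat; lia.
Qed.

Lemma part2 (Hb : exists2 L : R, 0 < L & forall k : nat, (0 < k)%N ->
     (I_ge I (k%:R * L) `\` I_ge I (k.+1%:R * L)) !=set0)
  (HBB : BB setT) : asympt_bohr_ap I (fun t => F t 0).
Proof.
have hper : forall m : nat, exists c, I c /\ m%:R <= enorm c /\ exists Mm : R,
    0 < Mm /\ forall t, I_ge I Mm t -> I_ge I Mm (t + c) ->
    nY (F (t + c) 0 - F t 0) <= 1 / m.+1%:R.
  move=> m.
  have em : 0 < 1 / m.+1%:R :> R by rewrite divr_gt0 ?ltr0n.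
  have [l [M [l0 [M0 hap]]]] := Fap HBB em.
  have dpos : 0 < n.+1%:R * (m%:R + l) :> R.
    by rewrite mulr_gt0 ?ltr0n // ltr_wpDl.
  have [t0 [It0 ht0]] := large_pt Hb (n.+1%:R * (m%:R + l)).
  have [i hi] := enorm_big dpos ht0.
  rewrite [_ * (_ + _)]mulrC mulfK ?pnatr_eq0 // in hi.
  have [tau [[htau Itau] hp]] := hap t0 It0.
  exists tau; split => //; split.
    apply: le_trans (coord_le_enorm tau i).
    have := coord_le_enorm (tau - t0) i; rewrite !mxE /= => h1.
    rewrite /cball /= in htau.
    have := ler_normD (t0 ord0 i - tau ord0 i) (tau ord0 i); rewrite subrK.
    rewrite distrC; move=> *; lra.
  exists M; split => // t h1 h2; rewrite -nY_le; exact: hp.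
have [c hc] := choice hper.
have cI : forall m, I (c m) by move=> m; case: (hc m).
have [phi [sphi [Fs hFs]]] := part1u HBB cI.
set G := fun t => Fs t 0.
have hU : forall N m, (N <= m)%N -> forall t, I t ->
    nY (F (t + c (phi m)) 0 - G t) <= 1 / N.+1%:R.
  by move=> N m hm t It; apply: hFs.
have Gu : forall e, 0 < e -> exists2 d, 0 < d & forall t t', I t -> I t' ->
    enorm (t - t') < d -> nY (G t - G t') <= e.
  move=> e e0; set e' := e / 3.
  have e'0 : 0 < e' by rewrite divr_gt0.
  have [d d0 hd] := Fuc e'0.
  have [N hN] := small_inv e'0.
  exists d => // t t' It It' htt.
  
  have h1 := hU N N (leqnn N) t It; rewrite nYB in h1.
  have h3 := hU N N (leqnn N) t' It'.
  have h2 : nY (F (t + (c (phi N))) 0 - F (t' + (c (phi N))) 0) <= e'.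
    rewrite -nY_le; apply: ltW; apply: hd.
    - exact: Iadd It (cI _).
    - exact: Iadd It' (cI _).
    - by rewrite addBB'.
    - by rewrite subrr normr0 lt0C.
  apply: le_trans (tri3_le h1 h2 h3) _.
  move: hN; rewrite /e'; set q := 1 / N.+1%:R => hN; clearbody q; lra.
have Fu : forall e, 0 < e -> exists2 d, 0 < d & forall t t', I t -> I t' ->
    enorm (t - t') < d -> nY (F t 0 - F t' 0) <= e.
  move=> e e0; have [d d0 hd] := Fuc e0; exists d => // t t' It It' htt.
  rewrite -nY_le; apply: ltW; apply: hd => //.
  by rewrite subrr normr0 lt0C.
exists G, (fun t => F t 0 - G t); split; [|split; [|split]].
- split; first exact: cont_of_unif.
  move=> e e0; set e' := e / 3.
  have e'0 : 0 < e' by rewrite divr_gt0.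
  have [l [M [l0 [M0 hap]]]] := Fap HBB e'0.
  exists l => // t0 It0.
  have [tau [[htau Itau] hp]] := hap t0 It0.
  exists tau; split => // t It.
  have [N hN] := small_inv e'0.
  have := @archi_boundP R M; rewrite ltW // => /(_ isT).
  set K := Num.Def.archi_bound M => hK.
  set m := maxn N K;
  have hw : I_ge I M (c (phi m)).
    split; first exact: cI.
    have := (hc (phi m)).2.1; apply: le_trans; apply: le_trans (ltW hK) _.
    rewrite ler_nat; apply: leq_trans (sinc_ge sphi m); exact: leq_maxr.
  have Itt : I (t + tau) by exact: Iadd.
  rewrite nY_le.
  have h1 := hU N m (leq_maxl _ _) (t + tau) Itt; rewrite nYB in h1.
  have h3 := hU N m (leq_maxl _ _) t It.
  have h2 : nY (F (t + tau + (c (phi m))) 0 - F (t + (c (phi m))) 0) <= e'.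
    have hM1 : I_ge I M (t + (c (phi m))) by rewrite addrC; apply: Hc.
    have hM2 : I_ge I M (t + (c (phi m)) + tau) by apply: Hc.
    rewrite addrAC -nY_le; exact: hp.
  apply: le_trans (tri3_le h1 h2 h3) _.
  move: hN; rewrite /e'; set q := 1 / N.+1%:R => hN; clearbody q; lra.
- apply: cont_of_unif => e e0; set e' := e / 2.
  have e'0 : 0 < e' by rewrite divr_gt0.
  have [d1 d10 hd1] := Fu _ e'0; have [d2 d20 hd2] := Gu _ e'0.
  exists (Num.min d1 d2); first by rewrite lt_min d10.
  move=> t t' It It'; rewrite lt_min => /andP[h1 h2].
  rewrite subBB; apply: le_trans (nYD _ _) _; rewrite nYN.
  have := hd1 _ _ It It' h1; have := hd2 _ _ It It' h2.
  rewrite /e'; lra.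
- move=> e e0; set e' := e / 2.
  have e'0 : 0 < e' by rewrite divr_gt0.
  have [N hN] := small_inv e'0.
  
  have [_ [_ [Mw [Mw0 hMw]]]] := hc (phi N).
  exists Mw => t It ht; rewrite nY_le.
  have h1 : I_ge I Mw t by [].
  have h2 : I_ge I Mw (t + (c (phi N))) by apply: Hc.
  have := hMw t h1 h2; rewrite nYB => h3.
  have := inv_mono R (sinc_ge sphi N) => h4.
  have h5 := hU N N (leqnn N) t It.
  rewrite (_ : F t 0 - G t = (F t 0 - F (t + (c (phi N))) 0) + (F (t + (c (phi N))) 0 - G t)); last first.
    by rewrite addrA subrK.
  apply: le_trans (nYD _ _) _.
  apply: le_trans (lerD (le_trans h3 h4) h5) _.
  move: hN; rewrite /e'; set q := 1 / N.+1%:R => hN; clearbody q; lra.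
- by move=> t It; rewrite addrC subrK.
Qed.

End Main.


Local Close Scope complex_scope.
Unset Implicit Arguments.
Set Strict Implicit.

Theorem theorem2p33 (R : realType) (n : nat)
  (X Y : completeNormedModType R[i]) (I : set 'rV[R]_n)
  (BB : set (set X)) (F : 'rV[R]_n -> X -> Y) :
  I !=set0 -> closed I ->
  (forall s t, I s -> I t -> I (s + t)) ->
  (forall B, BB B -> compact B) ->
  (forall x : X, exists2 B, BB B & B x) ->
  unif_cont_IX I F ->
  asympt_bohr_B_ap_type1 I BB F ->
  (* (a) *)
  (forall l M : R, 0 < l -> 0 < M ->
     exists t0, I t0 /\ exists k : R, 0 < k /\
       forall t, I_ge I (M + l) t -> exists t0', I t0' /\
         forall t0'', (cball t0' l `&` I) t0'' ->
           (cball t0 (k * l) `&` I_ge I M) (t - t0'')) ->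
  (* (b) *)
  (exists2 L : R, 0 < L & forall k : nat, (0 < k)%N ->
     (I_ge I (k%:R * L) `\` I_ge I (k.+1%:R * L)) !=set0) ->
  (* (c) *)
  (forall M : R, 0 < M -> forall s t, I_ge I M s -> I t -> I_ge I M (s + t)) ->
  R_B_multi_ap I BB F /\
  ((forall x : X, x = 0) -> BB = [set setT] ->
     asympt_bohr_ap I (fun t => F t 0)).
Proof.
move=> _ _ Iadd _ _ Fuc Fap Ha Hb Hc; split.
  exact: part1 Iadd Fuc Fap Ha Hc.
move=> _ HBB; apply: part2 Iadd Fuc Fap Ha Hc Hb _.
by rewrite HBB.
Qed.
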